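(* Let $X$ be a second-countable Hausdorff topological space and $T:X\to X$ a continuous map. The following are equivalent: (i) $T$ is topologically quasi-rigid; (ii) for every $N\in\mathbb{N}$, the $N$-fold direct product $T_{(N)}:X^N\to X^N$ is topologically recurrent.
   Context: A dynamical system $(X,T)$ is a continuous self-map $T$ of a Hausdorff topological space $X$. For $N\in\mathbb{N}$, $T_{(N)}:X^N\to X^N$ is $T_{(N)}(x_1,\dots,x_N)=(Tx_1,\dots,Tx_N)$. A map $T$ is topologically recurrent if for every non-empty open $U\subset X$ there is $n\in\mathbb{N}$ with $T^n(U)\cap U\neq\varnothing$. $T$ is topologically quasi-rigid with respect to a strictly increasing sequence $(n_k)_{k\in\mathbb{N}}$ of positive integers if for every non-empty open $U\subset X$ there is $k_U$ with $T^{n_k}(U)\cap U\neq\varnothing$ for all $k\geq k_U$; $T$ is topologically quasi-rigid if it is so with respect to some such sequence. *)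

(* Defs.v *)
From HB Require Import structures.
From mathcomp Require Import all_boot all_order all_algebra.
From mathcomp Require Import all_classical all_reals topology.
Set Implicit Arguments. Unset Strict Implicit. Unset Printing Implicit Defensive.
Import Order.TTheory GRing.Theory Num.Theory.
Local Open Scope classical_set_scope.

Definition top_recurrent (Y : topologicalType) (S : Y -> Y) : Prop :=
  forall U : set Y, open U -> U !=set0 ->
    exists n : nat, (0 < n)%N /\ (iter n S @` U `&` U) !=set0.

Definition top_quasi_rigid_wrt (Y : topologicalType) (S : Y -> Y) (nk : nat -> nat) : Prop :=
  forall U : set Y, open U -> U !=set0 ->
    exists kU : nat, forall k : nat, (kU <= k)%N -> (iter (nk k) S @` U `&` U) !=set0.

Definition top_quasi_rigid (Y : topologicalType) (S : Y -> Y) : Prop :=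
  exists nk : nat -> nat,
    [/\ (0 < nk 0)%N, (forall k, (nk k < nk k.+1)%N) & top_quasi_rigid_wrt S nk].

Definition prod_map (X : topologicalType) (T : X -> X) (N : nat) :
  {ptws 'I_N -> X} -> {ptws 'I_N -> X} := fun x i => T (x i).

(* Main.v *)
Require Import Defs.
From HB Require Import structures.
From mathcomp Require Import all_boot all_order all_algebra.
From mathcomp Require Import all_classical all_reals topology.
Local Open Scope classical_set_scope.

Section S.
Variables (X : topologicalType) (T : X -> X).

Lemma iter_prod N n (x : {ptws 'I_N -> X}) :
  iter n (@prod_map X T N) x = (fun i => iter n T (x i)).
Proof.
elim: n => [//|n IH] /=; rewrite IH; exact: functional_extensionality_dep.
Qed.

Lemma proj_nbhs N (p : {ptws 'I_N -> X}) (i : 'I_N) (V : set X) :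
  nbhs (p i) V -> nbhs p [set y : {ptws 'I_N -> X} | V (y i)].
Proof.
move=> hV; exact: (@proj_continuous _ (fun _ : 'I_N => X) i p V hV).
Qed.

Lemma box_open N (U : 'I_N -> set X) : (forall i, open (U i)) ->
  open ([set y : {ptws 'I_N -> X} | forall i, U i (y i)]).
Proof.
move=> oU; rewrite openE => p Hp.
suff H : forall n, nbhs p [set y : {ptws 'I_N -> X} | forall i : 'I_N, (i < n)%N -> U i (y i)].
  by apply: filterS (H N) => y Hy i; apply: Hy.
elim=> [|n IH]; first by apply: filterS filterT.
case: (ltnP n N) => hn.
  have := @proj_nbhs N p (Ordinal hn) (U (Ordinal hn)).
  move=> /(_ (open_nbhs_nbhs _)) H.
  have H' := H (conj (oU _) (Hp _)).
  apply: filterS (filterI IH H') => y [Hy1 Hy2] i; rewrite ltnS leq_eqVlt.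
  case/orP => [/eqP Ei|]; last exact: Hy1.
  by have -> : i = Ordinal hn by apply: val_inj.
apply: filterS IH => y Hy i hi; apply: Hy.
exact: (leq_trans (ltn_ord i) hn).
Qed.

Lemma nbhs_box N (p : {ptws 'I_N -> X}) (W : set {ptws 'I_N -> X}) :
  nbhs p W -> exists U : 'I_N -> set X, (forall i, nbhs (p i) (U i)) /\
    [set y : {ptws 'I_N -> X} | forall i, U i (y i)] `<=` W.
Proof.
move=> hW.
pose D := [set U : 'I_N -> set X | forall i, nbhs (p i) (U i)].
pose B := fun U : 'I_N -> set X => [set y : {ptws 'I_N -> X} | forall i, U i (y i)].
pose F := filter_from D B.
have FF : Filter F.
  apply: filter_from_filter.
    by exists (fun _ => setT) => i; exact: filterT.
  move=> U V DU DV; exists (fun i => U i `&` V i).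
    by move=> i; exact: filterI.
  by move=> y Hy; split => i; case: (Hy i).
suff : F --> p.
  by move=> /(_ W hW) [U DU BW]; exists U.
have := @cvg_sup _ _ (fun i : 'I_N => Topological.class (initial_topology (fun f : 'I_N -> X => f i))) F p FF.
move=> [_ Hs]; apply: Hs => i.
apply/(@cvg_image _ X (fun f : 'I_N -> X => f i) F p FF).
  apply/seteqP; split => [y //|y _].
  by exists (fun j => if j == i then y else p j) => //=; rewrite eqxx.
move=> A /= hA.
exists (B (fun j => if j == i then A else setT)).
  exists (fun j => if j == i then A else setT) => //.
  by move=> j; case: eqP => [->//|_]; exact: filterT.
apply/seteqP; split => y.
  by move=> [z Hz <-]; have := Hz i; rewrite eqxx.
move=> Ay; exists (fun j => if j == i then y else p j); last by rewrite /= eqxx.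
by move=> j /=; case: eqP.
Qed.

Lemma iter_cont (hT : continuous T) n : continuous (iter n T).
Proof.
elim: n => [|n IH] x; first exact: cvg_id.
exact: (continuous_comp (IH x) (hT _)).
Qed.

End S.

Theorem mainTheorem1 (X : topologicalType) (T : X -> X)
  (hsc : @second_countable X) (hT2 : @hausdorff_space X) (hT : continuous T) :
  top_quasi_rigid T <->
  (forall N : nat, (0 < N)%N -> top_recurrent (@prod_map X T N)).
Proof.
split.
  move=> [nk [nk0 nkS qr]] N N0 W oW [x Wx].
  have [U [hU BW]] := @nbhs_box X _ _ _ (open_nbhs_nbhs (conj oW Wx)).
  have /choice [V hV] : forall i, exists V : set X, [/\ open V, V (x i) & V `<=` U i].
    move=> i; have := hU i; rewrite nbhsE => -[V [oV Vx] VU].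
    by exists V; split.
  have /choice [k hk] : forall i, exists kU, forall k, (kU <= k)%N ->
      (iter (nk k) T @` V i `&` V i) !=set0.
    move=> i; have [oV Vx _] := hV i.
    by apply: qr => //; exists (x i).
  pose K := (\max_i k i)%N.
  have nkge : forall m, (nk 0 <= nk m)%N.
    elim=> [//|m IH]; exact: leq_trans IH (ltnW (nkS m)).
  have /choice [y hy] : forall i, exists y, V i y /\ V i (iter (nk K) T y).
    move=> i; have [z [[y Vy <-] Vz]] := hk i K (leq_bigmax i).
    by exists y.
  exists (nk K); split; first exact: leq_trans nk0 (nkge K).
  exists (iter (nk K) (@prod_map X T N) (y : {ptws 'I_N -> X})); split.
    exists (y : {ptws 'I_N -> X}) => //.
    by apply: BW => i; have [_ _ VU] := hV i; apply: VU; case: (hy i).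
  rewrite iter_prod; apply: BW => i /=.
  by have [_ _ VU] := hV i; apply: VU; case: (hy i).
move=> H.
case: (pselect (exists x : X, True)) => [[x0 _]|X0]; last first.
  exists (fun k => k.+1); split => // U _ [x _].
  by exfalso; apply: X0; exists x.
have simul : forall k (U : nat -> set X), (forall j, open (U j)) ->
    (forall j, U j !=set0) -> exists n, (0 < n)%N /\
    forall j, (j <= k)%N -> (iter n T @` U j `&` U j) !=set0.
  move=> k U oU nU.
  have /choice [w hw] := nU.
  have := H k.+1 isT [set y : {ptws 'I_k.+1 -> X} | forall i : 'I_k.+1, U i (y i)]
    (@box_open X _ _ (fun i => oU i)).
  case.
    by exists ((fun i => w i) : {ptws 'I_k.+1 -> X}) => i.
  move=> n [n0 [z [[y Wy <-] Wz]]].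
  rewrite iter_prod in Wz.
  exists n; split => // j jk.
  have jk' : (j < k.+1)%N by [].
  exists (iter n T (y (Ordinal jk'))); split; last exact: (Wz (Ordinal jk')).
  by exists (y (Ordinal jk')) => //; exact: (Wy (Ordinal jk')).
have unb : forall M k (U : nat -> set X), (forall j, open (U j)) ->
    (forall j, U j !=set0) -> exists n, (M < n)%N /\
    forall j, (j <= k)%N -> (iter n T @` U j `&` U j) !=set0.
  elim=> [|M IH] k U oU nU; first exact: simul.
  have [n [Mn gn]] := IH k U oU nU.
  pose V j := if (j <= k)%N then U j `&` (iter n T @^-1` U j) else U j.
  have oV : forall j, open (V j).
    move=> j; rewrite /V; case: ifP => _ //; apply: openI => //.
    by apply: open_comp => // y _; exact: iter_cont.
  have nV : forall j, V j !=set0.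
    move=> j; rewrite /V; case: ifP => jk //.
    by have [z [[y Uy <-] Uz]] := gn j jk; exists y.
  have [m [m0 gm]] := simul k V oV nV.
  exists (n + m); split; first by rewrite -addn1 leq_add.
  move=> j jk; have := gm j jk; rewrite /V jk.
  move=> [z [[y [Uy _] <-] [_ Uz]]].
  exists (iter (n + m) T y); split; first by exists y.
  by rewrite iterD.
have [Bs cB [Bo Bb]] := hsc.
have [f finj] := countable_injP _ cB.
have /choice [E hE] : forall j, exists E : set X, open E /\
    forall b, Bs b -> f b = j -> E = b.
  move=> j; case: (pselect (exists b, Bs b /\ f b = j)) => [[b [Bb0 fb]]|nb].
    exists b; split; first exact: Bo.
    move=> b' Bb' fb'; apply: finj; rewrite ?inE //; congruence.
  exists setT; split; first exact: openT.
  by move=> b Bb0 fb; exfalso; apply: nb; exists b.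
pose G j := if pselect (E j !=set0) then E j else setT.
have oG : forall j, open (G j).
  move=> j; rewrite /G; destruct (pselect (E j !=set0)); last exact: openT.
  by case: (hE j).
have nG : forall j, G j !=set0.
  move=> j; rewrite /G; destruct (pselect (E j !=set0)) => //.
  by exists x0.
have /choice [g hg] : forall km : nat * nat, exists n, (km.2 < n)%N /\
    forall j, (j <= km.1)%N -> (iter n T @` G j `&` G j) !=set0.
  by move=> [k M]; exact: unb.
pose nk := fix nk k := match k with 0 => g (0, 0)%N | k'.+1 => g (k'.+1, nk k') end.
have nkgood : forall k j, (j <= k)%N -> (iter (nk k) T @` G j `&` G j) !=set0.
  by case=> [|k] j jk; [exact: (hg (0, 0)%N).2 | exact: (hg (k.+1, nk k)).2].
exists nk; split.
- exact: (hg (0, 0)%N).1.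
- by move=> k; exact: (hg (k.+1, nk k)).1.
move=> U oU [x Ux].
have := Bb x U (open_nbhs_nbhs (conj oU Ux)).
move=> [b [Bsb bx] bU].
exists (f b) => k kk.
have Gb : G (f b) = b.
  rewrite /G; destruct (pselect (E (f b) !=set0)) as [e|nE].
    exact: (hE (f b)).2.
  by exfalso; apply: nE; rewrite ((hE (f b)).2 b Bsb erefl); exists x.
have := nkgood k (f b) kk; rewrite Gb.
move=> [z [[y yb <-] zb]].
by exists (iter (nk k) T y); split; [exists y => //; apply: bU | apply: bU].
Qed.
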